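(* Let $\mathcal{M}$ be an RKHS of functions of $(a,w,x)$ with kernel $K_{\mathcal{M}}$ and $\mathcal{G}$ an RKHS of functions of $(a,z,x)$ with kernel $K_{\mathcal{G}}$, each with its canonical RKHS norm, and let $\lambda_m,\gamma_m,\lambda_g,\gamma_g>0$. Given data $\{(a_i,z_i,w_i,x_i,y_i)\}_{i=1}^n$, define $\Phi^n_q(q,m;p)=\frac1n\sum_i\big(q(a_i,z_i,x_i)-\frac1{p(a_i\mid w_i,x_i)}\big)m(a_i,w_i,x_i)$ and $\Phi^n_h(h,g)=\frac1n\sum_i(y_i-h(a_i,w_i,x_i))g(a_i,z_i,x_i)$, and let $K_{\mathcal{M},n}=(K_{\mathcal{M}}((a_i,w_i,x_i),(a_j,w_j,x_j)))_{i,j=1}^n$, $K_{\mathcal{G},n}=(K_{\mathcal{G}}((a_i,z_i,x_i),(a_j,z_j,x_j)))_{i,j=1}^n$, $\psi_{q,n}=\big(\frac1n(q(a_i,z_i,x_i)-\frac1{p(a_i\mid w_i,x_i)})\big)_{i=1}^n$, $\psi_{h,n}=\big(\frac1n(y_i-h(a_i,w_i,x_i))\big)_{i=1}^n$. Then for any $q,h$, $$\max_{m\in\mathcal{M}}\Phi^n_q-\lambda_m\|m\|_{2,n}^2-\gamma_m\|m\|_{\mathcal{M}}^2=\frac1{4\gamma_m}\psi_{q,n}^\top K_{\mathcal{M},n}\Big(\frac{\lambda_m}{\gamma_m}\frac1nK_{\mathcal{M},n}+I\Big)^{-1}\psi_{q,n}=\frac1{4\gamma_m}\psi_{q,n}^\top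 K_{\mathcal{M},n}^{1/2}\Big(\frac{\lambda_m}{\gamma_m}\frac1nK_{\mathcal{M},n}+I\Big)^{-1}K_{\mathcal{M},n}^{1/2}\psi_{q,n},$$ $$\max_{g\in\mathcal{G}}\Phi^n_h-\lambda_g\|g\|_{2,n}^2-\gamma_g\|g\|_{\mathcal{G}}^2=\frac1{4\gamma_g}\psi_{h,n}^\top K_{\mathcal{G},n}\Big(\frac{\lambda_g}{\gamma_g}\frac1nK_{\mathcal{G},n}+I\Big)^{-1}\psi_{h,n}=\frac1{4\gamma_g}\psi_{h,n}^\top K_{\mathcal{G},n}^{1/2}\Big(\frac{\lambda_g}{\gamma_g}\frac1nK_{\mathcal{G},n}+I\Big)^{-1}K_{\mathcal{G},n}^{1/2}\psi_{h,n}.$$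
   Context: $\|m\|_{2,n}^2=\frac1n\sum_i m^2(a_i,w_i,x_i)$ and $\|g\|_{2,n}^2=\frac1n\sum_i g^2(a_i,z_i,x_i)$; $p(a\mid w,x)$ is a (given) conditional density of $A$ given $(W,X)$; $I$ is the $n\times n$ identity matrix. *)

(* Defs.v *)
From HB Require Import structures.
From mathcomp Require Import all_boot all_order all_algebra.
From mathcomp Require Import reals.
From Stdlib Require Import ClassicalEpsilon.
Set Implicit Arguments. Unset Strict Implicit. Unset Printing Implicit Defensive.
Import Order.TTheory GRing.Theory Num.Theory.
Local Open Scope ring_scope.

Section RKHS.
Variable R : realType.

Definition is_RKHS (T : Type) (K : T -> T -> R) (H : (T -> R) -> Prop)
    (ip : (T -> R) -> (T -> R) -> R) : Prop :=
      H (fun _ => 0)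
    /\ (forall (c : R) f g, H f -> H g -> H (fun t => c * f t + g t))
    /\
      (forall f g, H f -> H g -> ip f g = ip g f)
    /\ (forall (c : R) f g k, H f -> H g -> H k ->
         ip (fun t => c * f t + g t) k = c * ip f k + ip g k)
    /\ (forall f, H f -> f <> (fun _ => 0) -> 0 < ip f f)
    /\
      (forall u : nat -> T -> R, (forall k, H (u k)) ->
        (forall e : R, 0 < e -> exists N, forall k l, (N <= k)%N -> (N <= l)%N ->
           ip (fun t => u k t - u l t) (fun t => u k t - u l t) < e) ->
        exists2 f, H f & forall e : R, 0 < e -> exists N, forall k, (N <= k)%N ->
           ip (fun t => u k t - f t) (fun t => u k t - f t) < e)
    /\
      (forall t, H (fun s => K s t))
    /\ (forall f t, H f -> f t = ip f (fun s => K s t)).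

Definition gram_mx (T : Type) (K : T -> T -> R) n (pts : 'I_n -> T) : 'M[R]_n :=
  \matrix_(i, j) K (pts i) (pts j).

Definition psd_mx n (S : 'M[R]_n) : Prop :=
  S^T = S /\ forall v : 'cV[R]_n, 0 <= (v^T *m S *m v) ord0 ord0.

Definition mx_sqrt n (S : 'M[R]_n) : 'M[R]_n :=
  epsilon (inhabits 0) (fun Q : 'M[R]_n => psd_mx Q /\ Q *m Q = S).

Definition qform n (u : 'cV[R]_n) (A : 'M[R]_n) (v : 'cV[R]_n) : R :=
  (u^T *m A *m v) ord0 ord0.

End RKHS.

(* Main.v *)
Require Import Defs.
From HB Require Import structures.
From mathcomp Require Import all_boot all_order all_algebra.
From mathcomp Require Import reals.
From mathcomp Require Import complex ring lra boolp.
From Stdlib Require Import ClassicalEpsilon.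
Import Order.TTheory GRing.Theory Num.Theory.
Local Open Scope ring_scope.

Section Cx.
Local Open Scope complex_scope.

Lemma interp_ex (F : fieldType) (f : F -> F) (s : seq F) :
  exists p : {poly F}, forall x, x \in s -> p.[x] = f x.
Proof.
elim: s => [|y s [p hp]]; first by exists 0.
case: (boolP (y \in s)) => ys.
  by exists p => x; rewrite inE => /orP[/eqP->|]; apply: hp.
pose P := \prod_(z <- s) ('X - z%:P).
have Py : P.[y] != 0.
  rewrite horner_prod prodf_seq_neq0; apply/allP => z zs /=.
  by rewrite hornerXsubC subr_eq0; by apply: contraNneq ys => ->.
exists (p + ((f y - p.[y]) / P.[y]) *: P) => x; rewrite inE => /orP[/eqP->|xs].
  by rewrite hornerD hornerZ mulfVK // addrC subrK.
have Px : P.[x] = 0.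
  apply/eqP; rewrite horner_prod prodf_seq_eq0; apply/hasP; exists x => //=.
  by rewrite hornerXsubC subrr.
by rewrite hornerD hornerZ Px mulr0 addr0 hp.
Qed.

Section C.
Variable R : rcfType.
Lemma Re_add (x y : R[i]) : complex.Re (x + y) = complex.Re x + complex.Re y.
Proof. by case: x; case: y. Qed.
Lemma Im_add (x y : R[i]) : complex.Im (x + y) = complex.Im x + complex.Im y.
Proof. by case: x; case: y. Qed.
Lemma Re_sum m (F : 'I_m -> R[i]) : complex.Re (\sum_i F i) = \sum_i complex.Re (F i).
Proof. exact: (big_morph _ Re_add). Qed.
Lemma Im_sum m (F : 'I_m -> R[i]) : complex.Im (\sum_i F i) = \sum_i complex.Im (F i).
Proof. exact: (big_morph _ Im_add). Qed.
Lemma Re_mulr (z : R[i]) (k : R) : complex.Re (z * k%:C) = complex.Re z * k.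
Proof. by case: z => a b /=; rewrite mulr0 subr0. Qed.
Lemma Im_mulr (z : R[i]) (k : R) : complex.Im (z * k%:C) = complex.Im z * k.
Proof. by case: z => a b /=; rewrite mulr0 add0r. Qed.
Lemma Re_mull (z : R[i]) (k : R) : complex.Re (k%:C * z) = k * complex.Re z.
Proof. by rewrite mulrC Re_mulr mulrC. Qed.
Lemma Im_mull (z : R[i]) (k : R) : complex.Im (k%:C * z) = k * complex.Im z.
Proof. by rewrite mulrC Im_mulr mulrC. Qed.
Lemma real_Re (z : R[i]) : z \is Num.real -> z = (complex.Re z)%:C.
Proof.
by case: z => a b; rewrite realE /= => /orP[] /andP[/eqP hb _]; rewrite /real_complex_def ?hb -?hb.
Qed.
Lemma conj_realC (k : R) : Num.conj (k%:C) = k%:C.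
Proof. by apply: conj_Creal; apply/complex_realP; exists k. Qed.
End C.

Lemma horner_vanish (R : rcfType) n (K : 'M[R]_n.+1) (U : 'M[R[i]]_n.+1) (r : 'I_n.+1 -> R) :
  U \in unitmx -> map_mx (real_complex R) K = invmx U *m diag_mx (\row_j (r j)%:C) *m U ->
  forall p : {poly R}, (forall j, p.[r j] = 0) -> horner_mx K p = 0.
Proof.
move=> Uu hK p hp.
apply: (@map_mx_inj _ _ (real_complex R)).
rewrite map_horner_mx hK horner_mx_uconjC // horner_mx_diag map_mx0.
suff -> : map_mx (horner (map_poly (real_complex R) p)) (\row_j (r j)%:C) = 0.
  by rewrite linear0 mulmx0 mul0mx.
by apply/rowP => j; rewrite !mxE horner_map hp.
Qed.

Lemma horner_mx_tr (R : comNzRingType) n (K : 'M[R]_n.+1) p :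
  K^T = K -> (horner_mx K p)^T = horner_mx K p.
Proof.
move=> hK; elim/poly_ind: p => [|p c IH]; first by rewrite rmorph0 trmx0.
rewrite rmorphD rmorphM /= horner_mx_X horner_mx_C linearD /= tr_scalar_mx -mulmxE.
by rewrite trmx_mul IH hK (comm_mx_horner _ (erefl (K *m K))).
Qed.

Lemma real_eig_nonneg (R : realType) n (K : 'M[R]_n) (a : 'rV[R]_n) (r : R) :
  psd_mx K -> a != 0 -> a *m K = r *: a -> 0 <= r.
Proof.
move=> [_ Kpsd] a0 ea.
have := Kpsd (a^T); rewrite trmxK ea -scalemxAl mxE.
have pos : 0 < (a *m a^T) 0 0.
  rewrite mxE lt_def; apply/andP; split; last first.
    by apply: sumr_ge0 => k _; rewrite mxE -expr2 sqr_ge0.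
  apply: contra a0 => /eqP h; apply/eqP/rowP => k.
  have hk : forall i, a 0 i * a^T i 0 = 0.
    move=> i; apply: (psumr_eq0P _ h) => // j _; by rewrite mxE -expr2 sqr_ge0.
  by have /eqP := hk k; rewrite !mxE mulf_eq0 orbb => /eqP ->.
by rewrite pmulr_lge0.
Qed.

Lemma psd_sqrt_ex (R : realType) n (K : 'M[R]_n) :
  psd_mx K -> exists Q, psd_mx Q /\ Q *m Q = K.
Proof.
case: n K => [|n] K Kp; have [Ksym Kpsd] := Kp.
  exists 0; split; last by apply/matrixP => [[]].
  by split; [rewrite trmx0 | move=> v; rewrite mulmx0 mul0mx mxE].
pose KC := map_mx (real_complex R) K.
have KCh : KC \is hermsymmx.
  apply/is_hermitianmxP; rewrite expr0 scale1r; apply/matrixP => i j.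
  by rewrite !mxE conj_realC -{1}Ksym mxE.
have KCn := hermitian_normalmx KCh.
have dreal := hermitian_spectral_diag_real KCh.
have eK : KC = invmx (spectralmx KC) *m diag_mx (spectral_diag KC) *m spectralmx KC.
  exact/orthomx_spectralP.
have Uu : spectralmx KC \in unitmx := spectral_unit KC.
move: eK Uu dreal; set U := spectralmx KC; set d := spectral_diag KC => eK Uu dreal.
pose r j := complex.Re (d 0 j).
have dr : d = \row_j (r j)%:C.
  by apply/rowP => j; rewrite mxE /r RRe_real //; exact: (mxOverP dreal).
have eK' : KC = invmx U *m diag_mx (\row_j (r j)%:C) *m U by rewrite -dr.
have rge0 : forall j, 0 <= r j.
  move=> j.
  have eig : row j U *m KC = d 0 j *: row j U.
    have e : U *m KC = diag_mx d *m U by rewrite eK !mulmxA mulmxV // mul1mx.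
    by rewrite -row_mul e mul_diag_mx; apply/rowP => k; rewrite !mxE.
  have u0 : row j U != 0.
    apply: contraTneq Uu => u0; rewrite unitmxE unitfE negbK; apply/det0P.
    exists (delta_mx 0 j); last by rewrite -rowE.
    by apply/eqP => /matrixP/(_ 0 j); rewrite !mxE !eqxx /= => /eqP; rewrite oner_eq0.
  pose a := map_mx (@complex.Re R) (row j U).
  pose b := map_mx (@complex.Im R) (row j U).
  have ea : a *m K = r j *: a.
    apply/rowP => k; have /rowP/(_ k) := eig; rewrite !mxE => /(congr1 (@complex.Re R)).
    rewrite Re_sum dr mxE Re_mull => <-; apply: eq_bigr => l _; rewrite !mxE Re_mulr.
    done.
  have eb : b *m K = r j *: b.
    apply/rowP => k; have /rowP/(_ k) := eig; rewrite !mxE => /(congr1 (@complex.Im R)).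
    rewrite Im_sum dr mxE Im_mull => <-; apply: eq_bigr => l _; rewrite !mxE Im_mulr.
    done.
  have [a0|a0] := eqVneq a 0; last exact: real_eig_nonneg Kp a0 ea.
  have [b0|b0] := eqVneq b 0; last exact: real_eig_nonneg Kp b0 eb.
  case/eqP: u0; apply/rowP => k.
  have := congr1 (fun M : 'rV[R]_n.+1 => M 0 k) a0; have := congr1 (fun M : 'rV[R]_n.+1 => M 0 k) b0.
  rewrite !mxE => hb ha; rewrite (complexE (U j k)) ha hb.
  by rewrite !raddf0 mulr0 addr0.
have [p hp] := @interp_ex R (fun t => Num.sqrt t) (codom r).
have [p4 hp4] := @interp_ex R (fun t => Num.sqrt (Num.sqrt t)) (codom r).
have hv := @horner_vanish R n K U r Uu eK'.
have QQ : horner_mx K p *m horner_mx K p = K.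
  have h0 : horner_mx K (p * p - 'X) = 0.
    apply: hv => j; rewrite hornerD hornerN hornerM hornerX hp ?codom_f //.
    by rewrite -expr2 sqr_sqrtr // subrr.
  move: h0; rewrite rmorphB rmorphM /= horner_mx_X -mulmxE => /eqP.
  by rewrite subr_eq0 => /eqP.
have Q4Q4 : horner_mx K p4 *m horner_mx K p4 = horner_mx K p.
  have h0 : horner_mx K (p4 * p4 - p) = 0.
    apply: hv => j; rewrite hornerD hornerN hornerM hp4 ?codom_f // hp ?codom_f //.
    by rewrite -expr2 sqr_sqrtr ?sqrtr_ge0 // subrr.
  move: h0; rewrite rmorphB rmorphM /= -mulmxE => /eqP.
  by rewrite subr_eq0 => /eqP.
have Q4sym := @horner_mx_tr R n K p4 Ksym.
exists (horner_mx K p); split => //; split; first exact: (@horner_mx_tr R n K p Ksym).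
move=> v; rewrite -Q4Q4.
rewrite (_ : v^T *m _ *m v = (horner_mx K p4 *m v)^T *m (horner_mx K p4 *m v)); last first.
  by rewrite trmx_mul Q4sym !mulmxA.
by rewrite mxE; apply: sumr_ge0 => k _; rewrite mxE -expr2 sqr_ge0.
Qed.

End Cx.

Section Rkhs.
Local Set Implicit Arguments. Local Unset Strict Implicit.

Section Rk.
Variables (R : realType) (T : Type) (K : T -> T -> R) (H : (T -> R) -> Prop)
  (ip : (T -> R) -> (T -> R) -> R).
Hypothesis hK : is_RKHS K H ip.

Lemma H0 : H (fun _ => 0). Proof. by case: hK. Qed.
Lemma Hlin c f g : H f -> H g -> H (fun t => c * f t + g t).
Proof. by case: hK => _ [+ _]; apply. Qed.
Lemma ipC f g : H f -> H g -> ip f g = ip g f.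
Proof. by case: hK => _ [_ [+ _]]; apply. Qed.
Lemma iplin c f g k : H f -> H g -> H k -> ip (fun t => c * f t + g t) k = c * ip f k + ip g k.
Proof. by case: hK => _ [_ [_ [+ _]]]; apply. Qed.
Lemma ippos f : H f -> f <> (fun _ => 0) -> 0 < ip f f.
Proof. by case: hK => _ [_ [_ [_ [+ _]]]]; apply. Qed.
Lemma HK t : H (fun s => K s t).
Proof. by case: hK => _ [_ [_ [_ [_ [_ [+ _]]]]]]; apply. Qed.
Lemma Krepr f t : H f -> f t = ip f (fun s => K s t).
Proof. by case: hK => _ [_ [_ [_ [_ [_ [_ +]]]]]]; apply. Qed.

Lemma ip0 k : H k -> ip (fun _ => 0) k = 0.
Proof.
move=> Hk; have := iplin 1 H0 H0 Hk.
rewrite (_ : (fun _ => 1 * 0 + 0) = (fun _ => 0)); last by apply: funext => t; rewrite mul1r addr0.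
rewrite mul1r => h; apply: (addrI (ip (fun _ => 0) k)); by rewrite addr0 -h.
Qed.

Lemma ip_ge0 f : H f -> 0 <= ip f f.
Proof.
move=> Hf; have [->|f0] := pselect (f = fun _ => 0); first by rewrite ip0 //; apply: H0.
exact/ltW/ippos.
Qed.

Lemma Ksymm s t : K s t = K t s.
Proof. by rewrite (Krepr s (HK t)) (Krepr t (HK s)) ipC //; apply: HK. Qed.

Lemma Hsum (I : Type) (r : seq I) (al : I -> R) (F : I -> T -> R) :
  (forall j, H (F j)) -> H (fun s => \sum_(j <- r) al j * F j s).
Proof.
move=> HF; elim: r => [|x r IH].
  rewrite (_ : (fun s => \sum_(j <- [::]) al j * F j s) = fun _ => 0); first exact: H0.
  by apply: funext => s; rewrite big_nil.
rewrite (_ : (fun s => \sum_(j <- x :: r) al j * F j s) = (fun s => al x * F x s + \sum_(j <- r) al j * F j s)).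
  exact: Hlin.
by apply: funext => s; rewrite big_cons.
Qed.

Lemma ipsum (I : Type) (r : seq I) (al : I -> R) (F : I -> T -> R) g :
  (forall j, H (F j)) -> H g ->
  ip (fun s => \sum_(j <- r) al j * F j s) g = \sum_(j <- r) al j * ip (F j) g.
Proof.
move=> HF Hg; elim: r => [|x r IH].
  rewrite big_nil (_ : (fun s => \sum_(j <- [::]) al j * F j s) = fun _ => 0) ?ip0 //.
  by apply: funext => s; rewrite big_nil.
rewrite (_ : (fun s => \sum_(j <- x :: r) al j * F j s) = (fun s => al x * F x s + \sum_(j <- r) al j * F j s)).
  by rewrite iplin ?IH ?big_cons //; apply: Hsum.
by apply: funext => s; rewrite big_cons.
Qed.

End Rk.

Lemma mx_sqrtP (R : realType) n (K : 'M[R]_n) :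
  psd_mx K -> psd_mx (mx_sqrt K) /\ mx_sqrt K *m mx_sqrt K = K.
Proof.
move=> hK; rewrite /mx_sqrt.
have e := epsilon_spec (inhabits (0 : 'M[R]_n)) _ (@psd_sqrt_ex R n K hK).
exact e.
Qed.

Lemma rowpos (R : realType) n (a : 'rV[R]_n) : a != 0 -> 0 < (a *m a^T) 0 0.
Proof.
move=> a0.
rewrite mxE lt_def; apply/andP; split; last first.
  by apply: sumr_ge0 => k _; rewrite mxE -expr2 sqr_ge0.
apply: contra a0 => /eqP h; apply/eqP/rowP => k.
have hk : forall i, a 0 i * a^T i 0 = 0.
  move=> i; apply: (psumr_eq0P _ h) => // j _; by rewrite mxE -expr2 sqr_ge0.
by have /eqP := hk k; rewrite !mxE mulf_eq0 orbb => /eqP ->.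
Qed.

Lemma comm_inv (R : comUnitRingType) n (A B X : 'M[R]_n) :
  A *m X = X *m A -> A *m B = 1%:M -> B *m A = 1%:M -> B *m X = X *m B.
Proof.
move=> AX AB BA.
have -> : B *m X = B *m X *m (A *m B) by rewrite AB mulmx1.
by rewrite !mulmxA -(mulmxA B X A) -AX !mulmxA BA mul1mx.
Qed.

Lemma psd_unit (R : realType) n (Kn : 'M[R]_n) (c : R) :
  psd_mx Kn -> 0 < c -> c *: Kn + 1%:M \in unitmx.
Proof.
move=> [_ Kpsd] c0; rewrite unitmxE unitfE; apply/negP => /det0P [w w0 wM].
have e : (c *: (w *m Kn *m w^T) + w *m w^T) 0 0 = 0.
  have := congr1 (fun X : 'rV[R]_n => (X *m w^T) 0 0) wM => /=.
  by rewrite mul0mx mulmxDr mulmx1 -scalemxAr mulmxDl -scalemxAl [X in _ = X]mxE.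
move: e; rewrite [X in X = _]mxE [X in X + _ = _]mxE => e.
have := Kpsd (w^T); rewrite trmxK => h1.
have h2 := rowpos w0.
have : 0 < c * (w *m Kn *m w^T) 0 0 + (w *m w^T) 0 0.
  by apply: ltr_wpDl => //; apply: mulr_ge0 => //; apply: ltW.
by rewrite e ltxx.
Qed.

Section Gen.
Variables (R : realType) (T : Type) (K : T -> T -> R) (H : (T -> R) -> Prop)
  (ip : (T -> R) -> (T -> R) -> R).
Hypothesis hK : is_RKHS K H ip.

Lemma gen n (t : 'I_n -> T) (psi : 'cV[R]_n) (lam gam c : R) :
  0 < lam -> 0 < gam -> 0 < c ->
  let Kn := gram_mx K t in
  let B := invmx ((lam / gam * c) *: Kn + 1%:M) in
  let v := (4 * gam)^-1 * qform psi (Kn *m B) psi in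
  let obj := fun m => \sum_(i < n) psi i 0 * m (t i)
     - lam * (c * \sum_(i < n) m (t i) ^+ 2) - gam * ip m m in
  [/\ (exists2 m, H m & obj m = v), (forall m, H m -> obj m <= v)
    & v = (4 * gam)^-1 * qform psi (mx_sqrt Kn *m B *m mx_sqrt Kn) psi].
Proof.
move=> lam0 gam0 c0 Kn B v obj.
have HKt : forall j, H (fun s => K s (t j)) by move=> j; exact: (HK hK (t j)).
have Knsym : Kn^T = Kn by apply/matrixP => i j; rewrite !mxE (Ksymm hK).
have Knpsd : psd_mx Kn.
  split => // w.
  pose f := fun s => \sum_(j < n) w j 0 * K s (t j).
  have Hf : H f := @Hsum _ _ _ _ _ hK _ (index_enum _) (fun j => w j 0) (fun j s => K s (t j)) HKt.
  have := ip_ge0 hK Hf.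
  rewrite {1}/f (ipsum hK) //.
  rewrite (eq_bigr (fun j => w j 0 * f (t j))); last first.
    by move=> j _; rewrite (ipC hK (HKt j) Hf) -(Krepr hK (t j) Hf).
  suff -> : (w^T *m Kn *m w) 0 0 = \sum_(j < n) w j 0 * f (t j) by [].
  rewrite mxE; apply: eq_bigr => j _; rewrite mxE mulr_suml /f mulr_sumr.
  by apply: eq_bigr => i _; rewrite !mxE (Ksymm hK (t i)); ring.
pose c' := lam / gam * c.
have c'0 : 0 < c' by rewrite /c' mulr_gt0 // divr_gt0.
pose M := c' *: Kn + 1%:M.
have Mu : M \in unitmx := psd_unit Knpsd c'0.
have eMB : M *m B = 1%:M by rewrite /B mulmxV.
have eBM : B *m M = 1%:M by rewrite /B mulVmx.
have gne0 : gam != 0 by rewrite gt_eqF.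
have [al eal] : exists al : 'cV[R]_n, al = (2 * gam)^-1 *: (B *m psi) by eexists.
have Bpsi : B *m psi = (2 * gam) *: al.
  by rewrite eal scalerA mulfV ?scale1r // mulf_neq0 // pnatr_eq0.
have [mu emu] : exists mu : 'cV[R]_n, mu = Kn *m al by eexists.
have hpsi : forall i, psi i 0 = 2 * lam * c * mu i 0 + 2 * gam * al i 0.
  move=> i.
  have : psi = (2 * gam) *: (M *m al).
    by rewrite scalemxAr -Bpsi mulmxA eMB mul1mx.
  rewrite /M mulmxDl mul1mx -scalemxAl -emu => /matrixP/(_ i 0) ->.
  rewrite !mxE /c'; field.
  done.
pose ms := fun s => \sum_(j < n) al j 0 * K s (t j).
have Hms : H ms := @Hsum _ _ _ _ _ hK _ (index_enum _) (fun j => al j 0) (fun j s => K s (t j)) HKt.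
have mval : forall i, ms (t i) = mu i 0.
  by move=> i; rewrite emu mxE; apply: eq_bigr => j _; rewrite mxE mulrC.
have ipm : forall g, H g -> ip ms g = \sum_(j < n) al j 0 * g (t j).
  move=> g Hg; rewrite /ms (ipsum hK) //.
  by apply: eq_bigr => j _; rewrite (ipC hK (HKt j) Hg) -(Krepr hK (t j) Hg).
have Spsimu : \sum_(i < n) psi i 0 * mu i 0
    = 2 * lam * c * \sum_(i < n) mu i 0 ^+ 2 + 2 * gam * \sum_(i < n) al i 0 * mu i 0.
  rewrite !mulr_sumr -big_split; apply: eq_bigr => i _ /=; rewrite (hpsi i); ring.
have vval : v = lam * c * \sum_(i < n) mu i 0 ^+ 2 + gam * \sum_(i < n) al i 0 * mu i 0.
  rewrite /v /qform -mulmxA -mulmxA Bpsi -scalemxAr -emu -scalemxAr mxE mxE.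
  rewrite (eq_bigr (fun i => psi i 0 * mu i 0)); last by move=> i _; rewrite mxE.
  by rewrite Spsimu; field.
have objms : obj ms = v.
  rewrite /obj ipm //.
  have e1 : \sum_(i < n) psi i 0 * ms (t i) = \sum_(i < n) psi i 0 * mu i 0.
    by apply: eq_bigr => i _; rewrite mval.
  have e2 : \sum_(i < n) ms (t i) ^+ 2 = \sum_(i < n) mu i 0 ^+ 2.
    by apply: eq_bigr => i _; rewrite mval.
  have e3 : \sum_(i < n) al i 0 * ms (t i) = \sum_(i < n) al i 0 * mu i 0.
    by apply: eq_bigr => i _; rewrite mval.
  rewrite e1 e2 e3.
  by rewrite Spsimu vval; ring.
split.
- by exists ms.
- move=> m Hm.
  pose d := fun s => m s - ms s.
  have Hd : H d.
    rewrite (_ : d = fun s => -1 * ms s + m s); first exact: (Hlin hK (-1) Hms Hm).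
    by apply: funext => s; rewrite /d mulN1r addrC.
  have em : m = fun s => 1 * d s + ms s.
    by apply: funext => s; rewrite /d mul1r subrK.
  have ipmm : ip m m = ip d d + \sum_(j < n) al j 0 * d (t j)
                        + \sum_(j < n) al j 0 * m (t j).
    rewrite {1}em (iplin hK) // mul1r (ipC hK Hd Hm) {1}em (iplin hK) // mul1r.
    by rewrite !ipm.
  have S1 : \sum_(i < n) psi i 0 * m (t i)
      = 2 * lam * c * \sum_(i < n) mu i 0 * m (t i) + 2 * gam * \sum_(i < n) al i 0 * m (t i).
    by rewrite !mulr_sumr -big_split; apply: eq_bigr => i _ /=; rewrite (hpsi i); ring.
  have S2 : \sum_(j < n) al j 0 * d (t j)
      = \sum_(j < n) al j 0 * m (t j) - \sum_(j < n) al j 0 * mu j 0.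
    by rewrite -sumrB; apply: eq_bigr => j _ /=; rewrite /d mval; ring.
  have S3 : \sum_(j < n) d (t j) ^+ 2
      = \sum_(j < n) m (t j) ^+ 2 - 2 * \sum_(j < n) mu j 0 * m (t j)
        + \sum_(j < n) mu j 0 ^+ 2.
    by rewrite mulr_sumr -sumrB -big_split; apply: eq_bigr => j _ /=; rewrite /d mval; ring.
  have ge1 : 0 <= \sum_(j < n) d (t j) ^+ 2 by apply: sumr_ge0 => j _; apply: sqr_ge0.
  have ge2 : 0 <= ip d d by exact: (ip_ge0 hK Hd).
  have -> : obj m = v - (lam * c * \sum_(j < n) d (t j) ^+ 2 + gam * ip d d).
    by rewrite /obj ipmm S1 S2 S3 vval; ring.
  rewrite lerBlDr lerDl; apply: addr_ge0; apply: mulr_ge0 => //;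
    try apply: mulr_ge0; apply: ltW => //.
have [Spsd SS] := mx_sqrtP Knpsd.
move: Spsd SS; set S := mx_sqrt Kn => Spsd SS.
have SK : S *m Kn = Kn *m S by rewrite -SS mulmxA.
have SM : M *m S = S *m M.
  by rewrite /M mulmxDl mulmxDr -scalemxAl -scalemxAr SK mul1mx mulmx1.
have KM : M *m Kn = Kn *m M.
  by rewrite /M mulmxDl mulmxDr -scalemxAl -scalemxAr mul1mx mulmx1.
have SB := comm_inv SM eMB eBM.
have KB := comm_inv KM eMB eBM.
by rewrite -SB -mulmxA SS KB.
Qed.
End Gen.

End Rkhs.

Theorem mainTheorem8 (R : realType) (A W Z X : Type)
    (KM : (A * W * X) -> (A * W * X) -> R)
    (MM : ((A * W * X) -> R) -> Prop) (ipM : ((A * W * X) -> R) -> ((A * W * X) -> R) -> R)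
    (KG : (A * Z * X) -> (A * Z * X) -> R)
    (GG : ((A * Z * X) -> R) -> Prop) (ipG : ((A * Z * X) -> R) -> ((A * Z * X) -> R) -> R)
    (hM : is_RKHS KM MM ipM) (hG : is_RKHS KG GG ipG)
    (lam_m gam_m lam_g gam_g : R)
    (hlm : 0 < lam_m) (hgm : 0 < gam_m) (hlg : 0 < lam_g) (hgg : 0 < gam_g)
    (n : nat) (hn : (0 < n)%N)
    (a : 'I_n -> A) (z : 'I_n -> Z) (w : 'I_n -> W) (x : 'I_n -> X) (y : 'I_n -> R)
    (p : A -> W -> X -> R)
    (q : (A * Z * X) -> R) (h : (A * W * X) -> R) :
  let awx := fun i => (a i, w i, x i) in
  let azx := fun i => (a i, z i, x i) in
  let Phi_q := fun m : (A * W * X) -> R =>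
    n%:R^-1 * \sum_(i < n) (q (azx i) - (p (a i) (w i) (x i))^-1) * m (awx i) in
  let Phi_h := fun g : (A * Z * X) -> R =>
    n%:R^-1 * \sum_(i < n) (y i - h (awx i)) * g (azx i) in
  let norm2n_M := fun m : (A * W * X) -> R => n%:R^-1 * \sum_(i < n) m (awx i) ^+ 2 in
  let norm2n_G := fun g : (A * Z * X) -> R => n%:R^-1 * \sum_(i < n) g (azx i) ^+ 2 in
  let objM := fun m => Phi_q m - lam_m * norm2n_M m - gam_m * ipM m m in
  let objG := fun g => Phi_h g - lam_g * norm2n_G g - gam_g * ipG g g in
  let KMn := gram_mx KM awx in
  let KGn := gram_mx KG azx in
  let psi_q : 'cV[R]_n := \col_i (n%:R^-1 * (q (azx i) - (p (a i) (w i) (x i))^-1)) in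
  let psi_h : 'cV[R]_n := \col_i (n%:R^-1 * (y i - h (awx i))) in
  let BM := invmx ((lam_m / gam_m * n%:R^-1) *: KMn + 1%:M) in
  let BG := invmx ((lam_g / gam_g * n%:R^-1) *: KGn + 1%:M) in
  let vM := (4 * gam_m)^-1 * qform psi_q (KMn *m BM) psi_q in
  let vG := (4 * gam_g)^-1 * qform psi_h (KGn *m BG) psi_h in
  [/\ (exists2 m, MM m & objM m = vM) /\ (forall m, MM m -> objM m <= vM),
      vM = (4 * gam_m)^-1 * qform psi_q (mx_sqrt KMn *m BM *m mx_sqrt KMn) psi_q,
      (exists2 g, GG g & objG g = vG) /\ (forall g, GG g -> objG g <= vG)
    & vG = (4 * gam_g)^-1 * qform psi_h (mx_sqrt KGn *m BG *m mx_sqrt KGn) psi_h].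
Proof.
move=> awx azx Phi_q Phi_h norm2n_M norm2n_G objM objG KMn KGn psi_q psi_h BM BG vM vG.
have n0 : 0 < n%:R^-1 :> R by rewrite invr_gt0 ltr0n.
have [eM1 eM2 eM3] := gen hM awx psi_q hlm hgm n0.
have [eG1 eG2 eG3] := gen hG azx psi_h hlg hgg n0.
have oM : forall m, objM m = \sum_(i < n) psi_q i 0 * m (awx i)
     - lam_m * (n%:R^-1 * \sum_(i < n) m (awx i) ^+ 2) - gam_m * ipM m m.
  move=> m; rewrite /objM /Phi_q /norm2n_M mulr_sumr; congr (_ - _ - _).
  by apply: eq_bigr => i _; rewrite mxE mulrA.
have oG : forall g, objG g = \sum_(i < n) psi_h i 0 * g (azx i)
     - lam_g * (n%:R^-1 * \sum_(i < n) g (azx i) ^+ 2) - gam_g * ipG g g.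
  move=> g; rewrite /objG /Phi_h /norm2n_G mulr_sumr; congr (_ - _ - _).
  by apply: eq_bigr => i _; rewrite mxE mulrA.
split.
- split; first by have [m Hm e] := eM1; exists m => //; rewrite oM.
  by move=> m Hm; rewrite oM; apply: eM2.
- exact: eM3.
- split; first by have [g Hg e] := eG1; exists g => //; rewrite oG.
  by move=> g Hg; rewrite oG; apply: eG2.
- exact: eG3.
Qed.
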